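(* Let $\mathbb{Z}$ be a finite-dimensional Euclidean space, $L>0$, $G:\mathbb{Z}\to\mathbb{Z}$ $\frac1L$-co-coercive with a zero $z^*$ ($G(z^* )=0$). Let $\gamma_k\ge0$ be such that $\sum_{k\ge0}(k+1)^2\gamma_k^2<\infty$. Let $\{z^k\}$ be generated from $z^0\in\mathbb{Z}$ by: for $k\ge 0$, choose $\tilde z^k$ with $\|G(z^k)-\tilde z^k\|\le\gamma_k$ and set $z^{k+1}=\beta_k z^0+(1-\beta_k)z^k-\eta_k\tilde z^k$ with $\beta_k=1/(k+2)$, $\eta_k=(1-\beta_k)/L$. Then $\|G(z^k)\|\le O(k^{-1})$ and $\|z^{k+1}-z^k\|\le O(k^{-1})$ for $k\ge0$; i.e., there is a constant $C>0$ independent of $k$ with $\|G(z^k)\|\le C/(k+1)$ and $\|z^{k+1}-z^k\|\le C/(k+1)$ for all $k\ge0$.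
   Context: A map $G:\mathbb{Z}\to\mathbb{Z}$ is $c$-co-coercive if $\langle G(x_1)-G(x_2),x_1-x_2\rangle\ge c\|G(x_1)-G(x_2)\|^2$ for all $x_1,x_2$. *)

(* Defs.v *)
From HB Require Import structures.
From mathcomp Require Import all_boot all_order all_algebra.
From mathcomp Require Import all_classical all_reals all_analysis.
Set Implicit Arguments. Unset Strict Implicit. Unset Printing Implicit Defensive.
Import Order.TTheory GRing.Theory Num.Theory.
Local Open Scope ring_scope.

(* The finite-dimensional Euclidean space is modelled as R^n = 'rV[R]_n
   with the standard inner product. *)
Definition inner (R : realType) (n : nat) (u v : 'rV[R]_n) : R :=
  \sum_(i < n) u ord0 i * v ord0 i.

Definition enorm (R : realType) (n : nat) (u : 'rV[R]_n) : R :=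
  Num.sqrt (inner u u).

Definition cocoercive (R : realType) (n : nat) (c : R)
  (G : 'rV[R]_n -> 'rV[R]_n) : Prop :=
  forall x1 x2 : 'rV[R]_n,
    inner (G x1 - G x2) (x1 - x2) >= c * (enorm (G x1 - G x2)) ^+ 2.

(* Main.v *)
Require Import Defs.
From HB Require Import structures.
From mathcomp Require Import all_boot all_order all_algebra.
From mathcomp Require Import all_classical all_reals all_analysis.
From mathcomp Require Import ring lra.
Import Order.TTheory GRing.Theory Num.Theory numFieldNormedType.Exports.
Local Open Scope ring_scope.

Ltac inner_id := apply/eqP; rewrite -subr_eq0 /inner;
  do 4 rewrite ?mulr_sumr -?sumrN -?big_split /=;
  apply/eqP; apply: big1 => i _; rewrite ?mxE.

Lemma inner_ge0 {R : realType} {n : nat} (u : 'rV[R]_n) : 0 <= inner u u.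
Proof. by apply: sumr_ge0 => i _; rewrite -expr2 sqr_ge0. Qed.

Lemma enorm_ge0 {R : realType} {n : nat} (u : 'rV[R]_n) : 0 <= enorm u.
Proof. exact: sqrtr_ge0. Qed.

Lemma enorm_sq {R : realType} {n : nat} (u : 'rV[R]_n) : enorm u ^+ 2 = inner u u.
Proof. by rewrite /enorm sqr_sqrtr // inner_ge0. Qed.

Lemma enorm_mul {R : realType} {n : nat} (u : 'rV[R]_n) : enorm u * enorm u = inner u u.
Proof. by rewrite -expr2 enorm_sq. Qed.

Lemma inner0 {R : realType} {n : nat} (u v : 'rV[R]_n) : inner u u = 0 -> inner u v = 0.
Proof.
move=> h; apply: big1 => i _.
have nn : forall j, xpredT j -> 0 <= u ord0 j * u ord0 j.
  by move=> j _; rewrite -expr2 sqr_ge0.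
have := @psumr_eq0P _ _ xpredT (fun j => u ord0 j * u ord0 j) nn h i isT.
move/eqP; rewrite -expr2 sqrf_eq0 => /eqP ->; by rewrite mul0r.
Qed.

Lemma CS {R : realType} {n : nat} (u v : 'rV[R]_n) : inner u v <= enorm u * enorm v.
Proof.
set a := enorm u; set b := enorm v.
have a0 : 0 <= a by exact: enorm_ge0.
have b0 : 0 <= b by exact: enorm_ge0.
have id : inner (b *: u - a *: v) (b *: u - a *: v) =
   b^+2 * inner u u - 2 * a * b * inner u v + a^+2 * inner v v.
  by inner_id; ring.
have := inner_ge0 (b *: u - a *: v); rewrite id -!enorm_sq -/a -/b => h.
have [ab0|] := ltP 0 (a * b).
  rewrite -subr_ge0; rewrite -(pmulr_rge0 _ ab0); nra.
rewrite le_eqVlt ltNge mulr_ge0 // orbF mulf_eq0 => /orP[]/eqP a00.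
  by rewrite inner0 ?mulr_ge0 // -enorm_mul -/a a00 mul0r.
have: inner v u = 0 by rewrite inner0 // -enorm_mul -/b a00 mul0r.
have -> : inner v u = inner u v by inner_id; ring.
by move=> ->; rewrite mulr_ge0.
Qed.

Lemma enormN {R : realType} {n : nat} (u : 'rV[R]_n) : enorm (- u) = enorm u.
Proof. rewrite /enorm; congr Num.sqrt; inner_id; ring. Qed.

Lemma enormZ {R : realType} {n : nat} (c : R) (u : 'rV[R]_n) : enorm (c *: u) = `|c| * enorm u.
Proof.
rewrite /enorm -sqrtr_sqr -sqrtrM ?sqr_ge0 //; congr Num.sqrt; inner_id; ring.
Qed.

Lemma enorm_le {R : realType} {n : nat} (u : 'rV[R]_n) x : 0 <= x -> inner u u <= x ^+ 2 -> enorm u <= x.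
Proof. by move=> x0 h; rewrite -(ger0_norm x0) -sqrtr_sqr ler_sqrt // sqr_ge0. Qed.

Lemma enormD {R : realType} {n : nat} (u v : 'rV[R]_n) : enorm (u + v) <= enorm u + enorm v.
Proof.
apply: enorm_le; first by rewrite addr_ge0 // enorm_ge0.
have -> : inner (u + v) (u + v) = inner u u + 2 * inner u v + inner v v by inner_id; ring.
have := CS u v; rewrite -!enorm_mul; nra.
Qed.

Lemma natS {R : realType} (k : nat) : k.+1%:R = k%:R + 1 :> R.
Proof. by rewrite -addn1 natrD. Qed.

Lemma natS2 {R : realType} (k : nat) : k.+2%:R = k%:R + 2 :> R.
Proof. by rewrite -addn2 natrD. Qed.

Lemma inner_0r {R : realType} {n : nat} (u : 'rV[R]_n) : inner u 0 = 0.
Proof. by apply: big1 => i _; rewrite mxE mulr0. Qed.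

Lemma innerZZ {R : realType} {n : nat} c (u : 'rV[R]_n) : inner (c *: u) (c *: u) = c ^+ 2 * inner u u.
Proof. inner_id; ring. Qed.

Lemma innerZl {R : realType} {n : nat} c (u v : 'rV[R]_n) : inner (c *: u) v = c * inner u v.
Proof. inner_id; ring. Qed.

Definition pot {R : realType} {n : nat} (k : nat) (g zk z0 : 'rV[R]_n) : R :=
  k%:R * (k%:R + 1) / 2 * inner g g + (k%:R + 1) * inner g (zk - z0).

Lemma step_pot {R : realType} {n : nat} (k : nat) (z0 zk zt g g' z1 : 'rV[R]_n) :
  z1 = (k.+2%:R)^-1 *: z0 + (1 - (k.+2%:R)^-1) *: zk - (1 - (k.+2%:R)^-1) *: zt ->
  inner (g' - g) (g' - g) <= inner (g' - g) (z1 - zk) ->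
  pot k.+1 g' z1 z0 <= pot k g zk z0 +
    (k.+1%:R * k.+2%:R / 2 * inner (g - zt) (g - zt) + k.+1%:R * inner g (g - zt)).
Proof.
move=> hz1 hc.
have t0 : 0 <= (k%:R : R) by rewrite ler0n.
have t2 : (k%:R + 2 : R) != 0 by rewrite gt_eqF // ltr_wpDl.
have e : pot k g zk z0 +
    (k.+1%:R * k.+2%:R / 2 * inner (g - zt) (g - zt) + k.+1%:R * inner g (g - zt))
    - pot k.+1 g' z1 z0 =
   (k%:R + 1) * (k%:R + 2) * (inner (g' - g) (z1 - zk) - inner (g' - g) (g' - g))
   + (k%:R + 1) * (k%:R + 2) / 2 * inner (g' - g - (g - zt)) (g' - g - (g - zt)).
  rewrite /pot hz1 !(natS2 k) !(natS k).
  inner_id; field; by rewrite t2.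
rewrite -subr_ge0 e addr_ge0 // ?mulr_ge0 ?inner_ge0 ?subr_ge0 ?invr_ge0 //;
  by rewrite addr_ge0 ?ler0n.
Qed.
Lemma tel {R : realType} (k : nat) :
  \sum_(j < k) ((j.+1%:R * j.+2%:R)^-1 : R) = 1 - (k.+1%:R)^-1.
Proof.
elim: k => [|k IH]; first by rewrite big_ord0 invr1 subrr.
rewrite big_ord_recr /= IH.
have t0 : 0 <= (k%:R : R) by rewrite ler0n.
have h1 : (k%:R + 1 : R) != 0 by rewrite gt_eqF // ltr_wpDl.

have h3 : (k%:R + 2 : R) != 0 by rewrite gt_eqF // ltr_wpDl.
field. by rewrite [2 + _]addrC [1 + _]addrC h1 h3.
Qed.

Lemma gam_le {R : realType} (j : nat) (c : R) : 0 <= c ->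
  c <= (j.+1%:R * j.+2%:R)^-1 + j.+1%:R ^+ 2 * c ^+ 2.
Proof.
move=> c0.
set y : R := j.+1%:R.
have y1 : 1 <= y by rewrite /y ler1n.
have -> : (j.+2%:R : R) = y + 1 by rewrite /y natS.
have xp : 0 < y * (y + 1) by rewrite mulr_gt0 // ?ltr_wpDr //; lra.
rewrite -(ler_pM2l xp) [X in _ <= X]mulrDr mulfV ?gt_eqF //.
have h : 0 <= (y * (y + 1) * c - 1) ^+ 2 := sqr_ge0 _.
have h2 : y * (y + 1) * (y * (y + 1)) * c ^+ 2 <= y * (y + 1) * (2 * y ^+ 2) * c ^+ 2.
  apply: ler_wpM2r; first exact: sqr_ge0.
  apply: ler_wpM2l; first exact: ltW.
  nra.
nra.
Qed.
Lemma core {R : realType} {n : nat} (G : 'rV[R]_n -> 'rV[R]_n) zstar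
  (gamma : nat -> R) (z zt : nat -> 'rV[R]_n) (S : R) :
  (forall x y, inner (G x - G y) (G x - G y) <= inner (G x - G y) (x - y)) ->
  G zstar = 0 -> (forall k, 0 <= gamma k) ->
  (forall k, \sum_(j < k) (j.+1%:R) ^+ 2 * gamma j ^+ 2 <= S) ->
  (forall k, enorm (G (z k) - zt k) <= gamma k) ->
  (forall k, z k.+1 = (k.+2%:R)^-1 *: z 0%N + (1 - (k.+2%:R)^-1) *: z k
     - (1 - (k.+2%:R)^-1) *: zt k) ->
  exists C : R, 0 < C /\ forall k : nat,
    k.+1%:R * enorm (G (z k)) <= C /\ k.+1%:R * enorm (z k.+1 - z k) <= C.
Proof.
move=> coc Gz gp Sb err upd.
have S0 : 0 <= S by have := Sb 0%N; rewrite big_ord0.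
set Rn := enorm (z 0%N - zstar).
have Rn0 : 0 <= Rn := enorm_ge0 _.
have Gam : forall k, \sum_(j < k) gamma j <= 1 + S.
  move=> k; apply: (le_trans (y := \sum_(j < k) ((j.+1%:R * j.+2%:R)^-1
      + j.+1%:R ^+ 2 * gamma j ^+ 2))).
    by apply: ler_sum => j _; apply: gam_le.
  rewrite big_split /= tel; apply: lerD (Sb k).
  by rewrite gerBl invr_ge0 ler0n.
set g := fun k => G (z k).
set a := fun k => k.+1%:R * enorm (g k).
have a0 : forall k, 0 <= a k by move=> k; rewrite mulr_ge0 ?ler0n ?enorm_ge0.
set V := fun k => pot k (g k) (z k) (z 0%N).
have Vstep : forall k, V k.+1 <= V k +
    (k.+1%:R ^+ 2 * gamma k ^+ 2 + a k * gamma k).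
  move=> k.
  have := step_pot _ _ _ _ _ _ _ (upd k) (coc (z k.+1) (z k)).
  rewrite -/(g k) -/(g k.+1) => h.
  apply: (le_trans h); rewrite /V lerD2l.
  have t0 : 0 <= (k.+1%:R : R) by rewrite ler0n.
  apply: lerD.
    apply: ler_pM.
    - by rewrite mulr_ge0 ?invr_ge0 ?mulr_ge0 ?ler0n.
    - exact: inner_ge0.
    - rewrite expr2 -mulrA; apply: ler_wpM2l => //; rewrite ler_pdivrMr // (natS2 k) (natS k); have := ler0n R k; lra.
    - by rewrite -enorm_mul expr2; apply: ler_pM; rewrite ?enorm_ge0 //; apply: err.
  rewrite /a /= -mulrA ler_wpM2l //.
  by apply: (le_trans (CS _ _)); rewrite ler_wpM2l ?enorm_ge0 //; apply: err.
have Vsum : forall k, V k <= \sum_(j < k) (j.+1%:R ^+ 2 * gamma j ^+ 2 + a j * gamma j).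
  elim=> [|k IH].
    by rewrite big_ord0 /V /pot subrr inner_0r mulr0 addr0 (_ : (0%:R : R) = 0) // !mul0r.
  rewrite big_ord_recr /=; apply: (le_trans (Vstep k)); exact: lerD.
have Vlow : forall k, a k ^+ 2 / 2 - Rn * a k <= V k.
  move=> k.
  have i1 : inner (g k) (z k - z 0%N) = inner (g k) (z k - zstar) - inner (g k) (z 0%N - zstar).
    by inner_id; ring.
  have i2 : inner (g k) (g k) <= inner (g k) (z k - zstar).
    by have := coc (z k) zstar; rewrite Gz subr0.
  have i3 : inner (g k) (z 0%N - zstar) <= enorm (g k) * Rn := CS _ _.
  have t0 : 0 <= (k%:R : R) by rewrite ler0n.
  rewrite /V /pot i1 /a natS -enorm_mul in i2 *.
  set q := enorm (g k) in i2 i3 *.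
  have q0 : 0 <= q := enorm_ge0 _.
  set p := inner (g k) (z k - zstar) in i2 *.
  set r := inner (g k) (z 0%N - zstar) in i3 *.
  have X : 0 <= (k%:R + 1) * (p - q * q) by rewrite mulr_ge0 ?subr_ge0 // addr_ge0.
  have Y : 0 <= (k%:R + 1) * (q * Rn - r) by rewrite mulr_ge0 ?subr_ge0 // addr_ge0.
  have Z : 0 <= (k%:R + 1) * (q * q) by rewrite mulr_ge0 ?mulr_ge0 // addr_ge0.
  lra.
have Key : forall k, a k ^+ 2 / 2 <= Rn * a k + S + \sum_(j < k) a j * gamma j.
  move=> k; have := le_trans (Vlow k) (Vsum k); rewrite big_split /=.
  have := Sb k; lra.

pose M := fix f (k : nat) : R := if k is k'.+1 then Num.max (f k') (a k'.+1) else a 0%N.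
have MS : forall k, M k.+1 = Num.max (M k) (a k.+1) by [].
have Mge : forall k j, (j <= k)%N -> a j <= M k.
  elim=> [|k IH] j.
    by rewrite leqn0 => /eqP ->.
  rewrite MS leq_eqVlt => /orP[/eqP ->|]; rewrite le_max.
    by rewrite lexx orbT.
  by rewrite ltnS => /IH ->.
have Mex : forall k, exists2 j, (j <= k)%N & M k = a j.
  elim=> [|k [j jk Mj]]; first by exists 0%N.
  rewrite MS Mj; case: (leP (a j) (a k.+1)) => h.
    by exists k.+1 => //; rewrite ?max_r.
  by exists j; [exact: leqW | rewrite ?max_l // ltW].
set K := 1 + 2 * (Rn + 1 + S) + 2 * S.
have Mb : forall k, M k <= K.
  move=> k; have [j jk Mj] := Mex k.
  have m0 := a0 j.
  have h1 : \sum_(i < j) a i * gamma i <= a j * (1 + S).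
    apply: (le_trans (y := \sum_(i < j) a j * gamma i)).
      apply: ler_sum => i _; apply: ler_wpM2r => //.
      have := Mge k i (leq_trans (ltnW (ltn_ord i)) jk); by rewrite Mj.
    rewrite -mulr_sumr; apply: ler_wpM2l => //; exact: Gam.
  have hk := Key j.
  rewrite Mj; set m := a j in m0 h1 hk *.
  have hm : m ^+ 2 <= 2 * Rn * m + 2 * S + 2 * m * (1 + S) by lra.
  rewrite leNgt; apply/negP => mK.
  have K3 : 3 <= K by rewrite /K; lra.
  have p1 : 0 < (m - K) * m by rewrite mulr_gt0 ?subr_gt0 //; lra.
  have p2 : 0 <= S * (m - 1) by rewrite mulr_ge0 // subr_ge0; lra.
  move: hm mK p1 p2 m0 S0 Rn0 K3; rewrite /K; move: (m) (Rn) (S) => x y w; clear; move=> *. nra.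
have ak : forall k, a k <= K := fun k => le_trans (Mge k k (leqnn k)) (Mb k).
have dist : forall k, enorm (z k - zstar) <= Rn + \sum_(j < k) gamma j.
  elim=> [|k IH]; first by rewrite big_ord0 addr0.
  set b : R := (k.+2%:R)^-1.
  have b0 : 0 <= b by rewrite invr_ge0 ler0n.
  have b1 : b <= 1 by rewrite invf_le1 ?ler1n ?ltr0n.
  have eq : z k.+1 - zstar = b *: (z 0%N - zstar) +
      ((1 - b) *: (z k - g k - zstar) + (1 - b) *: (g k - zt k)).
    by rewrite upd /b; apply/rowP => i; rewrite !mxE; ring.
  rewrite eq; apply: (le_trans (enormD _ _)).
  have e1 : enorm (b *: (z 0%N - zstar)) = b * Rn by rewrite enormZ ger0_norm.
  have e2 : enorm ((1 - b) *: (z k - g k - zstar)) <= (1 - b) * enorm (z k - zstar).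
    rewrite enormZ ger0_norm ?subr_ge0 //; apply: ler_wpM2l; first by rewrite subr_ge0.
    apply: enorm_le; first exact: enorm_ge0.
    rewrite enorm_sq.
    have -> : inner (z k - g k - zstar) (z k - g k - zstar) = inner (z k - zstar) (z k - zstar)
       - 2 * inner (g k) (z k - zstar) + inner (g k) (g k) by inner_id; ring.
    have := coc (z k) zstar; rewrite Gz subr0 -/(g k); have := inner_ge0 (g k); lra.
  have e3 : enorm ((1 - b) *: (g k - zt k)) <= gamma k.
    rewrite enormZ ger0_norm ?subr_ge0 //.
    have := err k; have := enorm_ge0 (g k - zt k); nra.
  have e4 := enormD ((1 - b) *: (z k - g k - zstar)) ((1 - b) *: (g k - zt k)).
  rewrite big_ord_recr /=.
  have gs : 0 <= \sum_(j < k) gamma j by apply: sumr_ge0.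
  have p1 : 0 <= (1 - b) * (Rn + \sum_(j < k) gamma j - enorm (z k - zstar)).
    by rewrite mulr_ge0 // subr_ge0 //.
  have p2 : 0 <= b * \sum_(j < k) gamma j by rewrite mulr_ge0.
  rewrite e1; lra.
have D : forall k, enorm (z 0%N - z k) <= 2 * Rn + 1 + S.
  move=> k; have -> : z 0%N - z k = (z 0%N - zstar) + - (z k - zstar).
    by rewrite opprB addrA subrK.
  apply: (le_trans (enormD _ _)); rewrite enormN -/Rn.
  have := dist k; have := Gam k; lra.
have gk : forall k, k.+1%:R * gamma k <= 1 + S.
  move=> k; have h := Sb k.+1; rewrite big_ord_recr /= in h.
  have hs : 0 <= \sum_(j < k) j.+1%:R ^+ 2 * gamma j ^+ 2.
    by apply: sumr_ge0 => j _; rewrite mulr_ge0 ?sqr_ge0.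
  have y0 : 0 <= k.+1%:R * gamma k :> R by rewrite mulr_ge0 ?ler0n.
  have : (k.+1%:R * gamma k) ^+ 2 <= S by rewrite exprMn; lra.
  set y := k.+1%:R * gamma k.
  have := sqr_ge0 (y - 1); nra.
exists (K + (2 * Rn + 1 + S) + (1 + S)).
split; first by rewrite /K; lra.
move=> k; split.
  by apply: (le_trans (ak k)); lra.
set b : R := (k.+2%:R)^-1.
have b0 : 0 <= b by rewrite invr_ge0 ler0n.
have b1 : b <= 1 by rewrite invf_le1 ?ler1n ?ltr0n.
have eq : z k.+1 - z k = b *: (z 0%N - z k) +
    (- ((1 - b) *: g k) + (1 - b) *: (g k - zt k)).
  by rewrite upd /b; apply/rowP => i; rewrite !mxE; ring.
rewrite eq.
have e0 := enormD (b *: (z 0%N - z k)) (- ((1 - b) *: g k) + (1 - b) *: (g k - zt k)).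
have e4 := enormD (- ((1 - b) *: g k)) ((1 - b) *: (g k - zt k)).
rewrite enormN !enormZ ger0_norm // ger0_norm ?subr_ge0 // in e0 e4.
set t1 : R := k.+1%:R.
have t0 : 0 <= t1 by rewrite ler0n.
have tb : t1 * b <= 1.
  by rewrite /t1 /b ler_pdivrMr ?ltr0n // mul1r ler_nat.
have f1 : t1 * b * enorm (z 0%N - z k) <= 2 * Rn + 1 + S.
  apply: (le_trans (y := 1 * enorm (z 0%N - z k))).
    by apply: ler_wpM2r => //; exact: enorm_ge0.
  by rewrite mul1r.
have q0 := enorm_ge0 (g k).
have r0 := enorm_ge0 (g k - zt k).
have f2 : t1 * ((1 - b) * enorm (g k)) <= K.
  apply: (le_trans _ (ak k)); rewrite /a /= -/t1; apply: ler_wpM2l => //; nra.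
have f3 : t1 * ((1 - b) * enorm (g k - zt k)) <= 1 + S.
  apply: (le_trans _ (gk k)); rewrite -/t1; apply: ler_wpM2l => //.
  have := err k; nra.
have f4 : t1 * enorm (b *: (z 0%N - z k) + (- ((1 - b) *: g k) + (1 - b) *: (g k - zt k)))
   <= t1 * (b * enorm (z 0%N - z k) + ((1 - b) * enorm (g k) + (1 - b) * enorm (g k - zt k))).
  apply: ler_wpM2l => //; lra.
lra.
Qed.
Theorem corollary3 (R : realType) (n : nat) (L : R) (G : 'rV[R]_n -> 'rV[R]_n)
  (zstar : 'rV[R]_n) (gamma : nat -> R) (z zt : nat -> 'rV[R]_n) :
  0 < L ->
  cocoercive L^-1 G ->
  G zstar = 0 ->
  (forall k, 0 <= gamma k) ->
  cvgn (series (fun k : nat => (k.+1%:R) ^+ 2 * gamma k ^+ 2)) ->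
  (forall k, enorm (G (z k) - zt k) <= gamma k) ->
  (forall k, z k.+1 =
     (k.+2%:R)^-1 *: z 0%N + (1 - (k.+2%:R)^-1) *: z k
     - ((1 - (k.+2%:R)^-1) / L) *: zt k) ->
  exists C : R, 0 < C /\
    forall k : nat, enorm (G (z k)) <= C / k.+1%:R /\
                    enorm (z k.+1 - z k) <= C / k.+1%:R.
Proof.
move=> L0 coc Gz gp cv err upd.
set f := fun k : nat => (k.+1%:R) ^+ 2 * gamma k ^+ 2.
have f0 : forall k, 0 <= f k by move=> k; rewrite mulr_ge0 ?sqr_ge0.
have nd : nondecreasing_seq (series f).
  apply/nondecreasing_seqP => k; rewrite /series /= big_nat_recr //= lerDl.
  exact: f0.
have Sb0 : forall k, \sum_(j < k) f j <= limn (series f).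
  move=> k; have := nondecreasing_cvgn_le nd cv k.
  by rewrite /series /= big_mkord.
set S := limn (series f) in Sb0.
have Li : 0 < L^-1 by rewrite invr_gt0.
have Lne : L != 0 by rewrite gt_eqF.
have hcoc : forall x y, inner (L^-1 *: G x - L^-1 *: G y) (L^-1 *: G x - L^-1 *: G y)
    <= inner (L^-1 *: G x - L^-1 *: G y) (x - y).
  move=> x y; rewrite -scalerBr innerZZ innerZl.
  have := coc x y; rewrite -enorm_sq => h.
  rewrite expr2 -mulrA; apply: ler_wpM2l; first exact: ltW.
  lra.
have hGz : L^-1 *: G zstar = 0 by rewrite Gz scaler0.
have hg : forall k, 0 <= gamma k / L by move=> k; rewrite divr_ge0 // ltW.
have hSb : forall k, \sum_(j < k) j.+1%:R ^+ 2 * (gamma j / L) ^+ 2 <= S / L ^+ 2.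
  move=> k.
  have -> : \sum_(j < k) j.+1%:R ^+ 2 * (gamma j / L) ^+ 2 = (\sum_(j < k) f j) / L ^+ 2.
    rewrite mulr_suml; apply: eq_bigr => j _; rewrite /f expr_div_n mulrA //.
  by apply: ler_wpM2r; rewrite ?invr_ge0 ?sqr_ge0.
have herr : forall k, enorm (L^-1 *: G (z k) - L^-1 *: zt k) <= gamma k / L.
  move=> k; rewrite -scalerBr enormZ ger0_norm; last exact: ltW.
  rewrite mulrC; apply: ler_wpM2r; [by rewrite invr_ge0 ltW | exact: err].
have hupd : forall k, z k.+1 = (k.+2%:R)^-1 *: z 0%N + (1 - (k.+2%:R)^-1) *: z k
     - (1 - (k.+2%:R)^-1) *: (L^-1 *: zt k).
  by move=> k; rewrite upd scalerA.
have [C [C0 hC]] := @core R n (fun x => L^-1 *: G x) zstar (fun k => gamma k / L) z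
   (fun k => L^-1 *: zt k) (S / L ^+ 2) hcoc hGz hg hSb herr hupd.
exists ((L + 1) * C); split; first by rewrite mulr_gt0 // addr_gt0.
move=> k; have [h1 h2] := hC k.
have kp : 0 < (k.+1%:R : R) by rewrite ltr0n.
rewrite !ler_pdivlMr //; split.
  have -> : G (z k) = L *: (L^-1 *: G (z k)) by rewrite scalerA mulfV // scale1r.
  rewrite enormZ ger0_norm ?ltW //.
  have := enorm_ge0 (L^-1 *: G (z k)); nra.
have := enorm_ge0 (z k.+1 - z k); nra.
Qed.
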